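(* For any even positive integer $n\geq 4$, $\Delta_D(D_{2n})=\mathcal{P}_e(D_{2n})$.
   Context: $D_{2n}=\langle a,b\mid a^n=b^2=e,\ ab=ba^{-1}\rangle$ ($n\geq 3$). The enhanced power graph $\mathcal{P}_e(G)$ has vertex set $G$ with distinct $x,y$ adjacent iff $\langle x,y\rangle$ is cyclic. The deep commuting graph $\Delta_D(G)$ has vertex set $G$, distinct vertices adjacent iff their preimages commute in a Schur cover $\tilde G$ of $G$ (a central extension $\{e\}\to M(G)\to\tilde G\to G\to\{e\}$ with kernel contained in $Z(\tilde G)\cap[\tilde G,\tilde G]$, of maximal order; $M(G)$ the Schur multiplier). *)

(* Defs.v *)
From mathcomp Require Import all_boot all_fingroup all_solvable.
Set Implicit Arguments.
Unset Strict Implicit.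
Unset Printing Implicit Defensive.
Local Open Scope group_scope.

Definition central_stem_ext (hT gT : finGroupType) (H : {group hT})
    (G : {group gT}) (f : {morphism H >-> gT}) : Prop :=
  f @* H = G /\ 'ker f \subset 'Z(H) :&: H^`(1).

Definition schur_cover (hT gT : finGroupType) (H : {group hT})
    (G : {group gT}) (f : {morphism H >-> gT}) : Prop :=
  central_stem_ext G f /\
  forall (kT : finGroupType) (K : {group kT}) (g : {morphism K >-> gT}),
    central_stem_ext G g -> #|K| <= #|H|.

(* Deep commuting graph adjacency w.r.t. the Schur cover f : H ->> G:
   distinct x, y adjacent iff their preimages commute (preimage-independent,
   since the kernel is central). *)
Definition deep_commuting_adj (hT gT : finGroupType) (H : {group hT})
    (f : {morphism H >-> gT}) (x y : gT) : Prop :=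
  x != y /\ exists2 x' : hT, x' \in H /\ f x' = x &
           exists2 y' : hT, y' \in H /\ f y' = y & commute x' y'.

Definition enh_power_adj (gT : finGroupType) (x y : gT) : Prop :=
  x != y /\ cyclic <<[set x; y]>>.

(* Main.v *)
Require Import Defs.
From mathcomp Require Import all_boot all_fingroup all_solvable zify.
Set Implicit Arguments.
Unset Strict Implicit.
Unset Printing Implicit Defensive.
Local Open Scope group_scope.

Lemma cfix (gT : finGroupType) (x y : gT) : commute x y -> x ^ y = x.
Proof. by move=> c; apply/conjg_fixP/commgP. Qed.

Section Dih.
Variables (gT : finGroupType) (r s : gT) (n : nat).
Hypotheses (n_even : ~~ odd n) (n_gt0 : 0 < n) (rn : r ^+ n = 1) (s2 : s ^+ 2 = 1)
  (rs : r ^ s = r^-1) (cardD : #|<[r]> <*> <[s]>| = n.*2).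

Lemma dih_nrs : <[s]> \subset 'N(<[r]>).
Proof. by rewrite norms_cycle rs groupV cycle_id. Qed.

Lemma dih_defD : <[r]> <*> <[s]> = <[r]> * <[s]>.
Proof. exact: norm_joinEr dih_nrs. Qed.

Lemma dih_ord : #[r] = n.
Proof.
have h1: #[r] %| n by rewrite order_dvdn rn.
have h1' := dvdn_leq n_gt0 h1.
have h2: #[s] <= 2 by apply: dvdn_leq => //; rewrite order_dvdn s2.
have e := mul_cardG <[r]> <[s]>. rewrite -dih_defD cardD -!orderE in e.
have h3 : 0 < #|<[r]> :&: <[s]>| by rewrite cardG_gt0.
have h4 : n.*2 <= #[r] * #[s] by rewrite e leq_pmulr.
have h5 : #[r] * #[s] <= #[r] * 2 by rewrite leq_mul2l h2 orbT.
apply/eqP; rewrite eqn_leq h1' /=.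
rewrite -muln2 in h4. lia.
Qed.

Lemma dih_mem x : x \in <[r]> <*> <[s]> -> x \notin <[r]> -> exists i, x = r ^+ i * s.
Proof.
rewrite dih_defD => /mulsgP[a b ra sb ->] nr.
case/cycleP: ra nr => i ->; case/cycleP: sb => j ->.
rewrite -(expg_mod j s2) => nr.
exists i.
have : j %% 2 < 2 by rewrite ltn_mod.
move: nr; case: (j %% 2) => [|[|//]] nr _.
- by case/negP: nr; rewrite expg0 mulg1 groupX // cycle_id.
- by rewrite expg1.
Qed.

Lemma dih_conj w u : w \in <[r]> -> u \in <[r]> <*> <[s]> -> u \notin <[r]> ->
  w ^ u = w^-1.
Proof.
move=> /cycleP[j ->] Du nu; have [i ->] := dih_mem Du nu.
rewrite conjgM (cfix (commuteX2 _ _ (commute_refl r))).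
by rewrite conjXg rs expVgn.
Qed.

Lemma dih_inv2 w : w \in <[r]> -> w ^+ 2 = 1 -> w = 1 \/ w = r ^+ n./2.
Proof.
case/cycleP=> j -> /eqP; rewrite -expgM -order_dvdn dih_ord => dv.
have hn : n = (n./2 * 2)%N.
  by rewrite -[n in LHS]odd_double_half (negbTE n_even) add0n muln2.
have: n./2 %| j by rewrite -(dvdn_pmul2r (isT : 0 < 2)) -hn.
case/dvdnP=> k ->.
have z2: (r ^+ n./2) ^+ 2 = 1 by rewrite -expgM -hn rn.
rewrite mulnC expgM -(expg_mod k z2).
have : k %% 2 < 2 by rewrite ltn_mod.
case: (k %% 2) => [|[|//]] _; [left; exact: expg0 | right; exact: expg1].
Qed.

End Dih.

Section Cover.
Variables (gT hT : finGroupType) (r s : gT) (n : nat) (H : {group hT})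
  (f : {morphism H >-> gT}).
Hypotheses (n_even : ~~ odd n) (n_gt0 : 0 < n) (rn : r ^+ n = 1) (s2 : s ^+ 2 = 1)
  (rs : r ^ s = r^-1) (cardD : #|<[r]> <*> <[s]>| = n.*2)
  (fH : f @* H = <[r]> <*> <[s]>) (kerZ : 'ker f \subset 'Z(H) :&: H^`(1))
  (big : n.*2 < #|H|).

Lemma ker_cent k h : k \in 'ker f -> h \in H -> commute k h.
Proof.
move=> Kk Hh; have := subsetP kerZ k Kk; rewrite inE => /andP[/centerP[_ c] _].
exact: c.
Qed.

Lemma lift x : x \in <[r]> <*> <[s]> -> exists2 x', x' \in H & f x' = x.
Proof. by rewrite -fH => /morphimP[x' Hx' _ ->]; exists x'. Qed.

Lemma key u u' w' : u \in <[r]> <*> <[s]> -> u \notin <[r]> ->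
  u' \in H -> f u' = u -> w' \in H -> f w' = r ^+ n./2 -> ~ commute u' w'.
Proof.
move=> Du nu Hu fu Hw fw cuw.
have Dr : r \in <[r]> <*> <[s]> by rewrite mem_gen // inE cycle_id.
have [r' Hr fr] := lift Dr.
set c := r' * r' ^ u'.
have Kc : c \in 'ker f.
  apply/kerP; first by rewrite groupM ?groupJ.
  by rewrite morphM ?groupJ // morphJ // fr fu (dih_conj s2 rs) ?cycle_id // mulgV.
have ru : r' ^ u' = r'^-1 * c by rewrite /c mulKg.
set t := [~ r', u'].
have Ht : t \in H by rewrite groupR.
have ctr : commute r' t.
  rewrite /t commgEl ru; apply: commuteM; first exact/commuteV/commute_refl.
  apply: commuteM; first exact/commuteV/commute_refl.
  exact/commute_sym/ker_cent.
have tu : t ^ u' = t^-1.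
  rewrite /t conjRg (cfix (commute_refl u')) ru commMgJ.
  have -> : [~ c, u'] = 1 by apply/eqP/commgP/ker_cent.
  have HR : [~ r'^-1, u'] \in H by rewrite groupR ?groupV.
  rewrite mulg1 (cfix (commute_sym (ker_cent Kc HR))).
  exact: commVg.
pose A := [set r'; u'] :|: 'ker f.
have AH : A \subset H.
  rewrite subUset; apply/andP; split; first by rewrite !subUset !sub1set Hr Hu.
  by apply/subsetP => k /dom_ker.
have HA : H :=: <<A>>.
  apply/eqP; rewrite eqEsubset gen_subG AH andbT.
  apply/subsetP => h Hh.
  have [i ui] := dih_mem s2 rs Du nu.
  have DL : <[r]> <*> <[s]> \subset f @* <<[set r'; u']>>.
    rewrite morphim_gen; last by rewrite !subUset !sub1set Hr Hu.
    rewrite morphimU !morphim_set1 // fr fu join_subG !cycle_subG.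
    have Rr : r \in <<[set r] :|: [set u]>> by rewrite mem_gen // !inE eqxx.
    have Ru : u \in <<[set r] :|: [set u]>> by rewrite mem_gen // !inE eqxx orbT.
    rewrite Rr /=.
    have -> : s = (r ^+ i)^-1 * u by rewrite ui mulKg.
    by rewrite groupM ?groupV ?groupX.
  have : f h \in f @* <<[set r'; u']>> by apply: (subsetP DL); rewrite -fH mem_morphim.
  case/morphimP => l Hl Ll fhl.
  have -> : h = l * (l^-1 * h) by rewrite mulKVg.
  rewrite groupM //; first by apply: (subsetP (genS (subsetUl _ _))).
  rewrite mem_gen // inE; apply/orP; right; apply/kerP; first by rewrite groupM ?groupV.
  by rewrite morphM ?groupV // morphV // fhl mulVg.
have nA : A \subset 'N(<[t]>).
  apply/subsetP => a /setUP[/set2P[]-> | Ka].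
  - by rewrite -cycle_subG norms_cycle (cfix (commute_sym ctr)) cycle_id.
  - by rewrite -cycle_subG norms_cycle tu groupV cycle_id.
  - by rewrite -cycle_subG norms_cycle (cfix (commute_sym (ker_cent Ka Ht))) cycle_id.
have nH : H \subset 'N(<[t]>) by rewrite HA gen_subG.
have c1 : forall a b : hT, commute a b -> [~ a, b] = 1 by move=> a b /commgP/eqP.
have ab : abelian (H / <[t]>).
  rewrite HA quotient_gen // abelian_gen /abelian.
  apply: quotient_cents2r.
  rewrite gen_subG; apply/subsetP => _ /imset2P[a b Aa Ab ->].
  case/setUP: Ab => [/set2P[]-> | Kb]; last first.
    by rewrite c1 ?group1 //; apply/commute_sym/ker_cent => //; apply: (subsetP AH).
  - case/setUP: Aa => [/set2P[]-> | Ka]; first [ by rewrite c1 ?group1 //; apply/ker_cent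
      | by rewrite commgg group1 | by rewrite -invgR groupV cycle_id | exact: cycle_id ].
  - case/setUP: Aa => [/set2P[]-> | Ka]; first [ by rewrite c1 ?group1 //; apply/ker_cent
      | by rewrite commgg group1 | by rewrite -invgR groupV cycle_id | exact: cycle_id ].
have Kt : 'ker f \subset <[t]>.
  apply: subset_trans (der1_min nH ab).
  by apply: subset_trans kerZ (subsetIr _ _).
set k := (r' ^+ n./2)^-1 * w'.
have Kk : k \in 'ker f.
  apply/kerP; first by rewrite groupM ?groupV ?groupX.
  by rewrite morphM ?groupV ?groupX // morphV ?groupX // morphX // fr fw mulVg.
have cz : commute u' (r' ^+ n./2).
  have -> : r' ^+ n./2 = w' * k^-1 by rewrite /k invMg invgK mulKVg.
  apply: commuteM => //; apply: commuteV; exact/commute_sym/ker_cent.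
have tn : t ^+ n./2 = 1.
  by rewrite /t -(commXg n./2 ctr); apply/eqP/commgP/commute_sym.
have hn : n = (n./2 * 2)%N.
  by rewrite -[n in LHS]odd_double_half (negbTE n_even) add0n muln2.
have K1 : 'ker f = 1.
  apply/trivgP/subsetP => k' Kk'.
  have := subsetP Kt k' Kk'; case/cycleP => m km.
  rewrite inE km.
  have ft : f t = (r ^+ 2)^-1.
    rewrite /t morphR // fr fu commgEl (dih_conj s2 rs) ?cycle_id //.
    by rewrite expgS expg1 invMg.
  have : f (t ^+ m) = 1 by rewrite -km mker.
  rewrite morphX // ft expVgn -expgM => /eqP; rewrite invg_eq1 -order_dvdn.
  rewrite (dih_ord n_even n_gt0 rn s2 rs cardD) {1}hn (mulnC 2 m) dvdn_pmul2r //.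
  by case/dvdnP => j ->; rewrite mulnC expgM tn expg1n.
have : #|f @* H| = #|H| by rewrite card_morphim setIid K1 indexg1.
by rewrite fH cardD => e; move: big; rewrite e ltnn.
Qed.

Lemma hard x y x' y' : x != y -> x' \in H -> f x' = x -> y' \in H -> f y' = y ->
  commute x' y' -> cyclic <<[set x; y]>>.
Proof.
have mD a' : a' \in H -> f a' \in <[r]> <*> <[s]> by move=> Ha; rewrite -fH mem_morphim.
have cD a' b' : a' \in H -> b' \in H -> commute a' b' -> commute (f a') (f b').
  by move=> Ha Hb cab; rewrite /commute -!morphM // cab.
have refl_case a b a' b' : a \notin <[r]> -> b \in <[r]> -> a' \in H -> f a' = a ->
    b' \in H -> f b' = b -> commute a' b' -> b = 1.
  move=> na rb Ha fa Hb fb cab.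
  have Da : a \in <[r]> <*> <[s]> by rewrite -fa mD.
  have cab0 : commute a b by rewrite -fa -fb; apply: cD.
  have bb : b = b^-1 by rewrite -(dih_conj s2 rs rb Da na) (cfix (commute_sym cab0)).
  have b2 : b ^+ 2 = 1 by rewrite expgS expg1 {2}bb mulgV.
  case: (dih_inv2 n_even n_gt0 rn s2 rs cardD rb b2) => // bz.
  by case: (key Da na Ha fa Hb (etrans fb bz)).
move=> nxy Hx fx Hy fy cxy.
have Dx : x \in <[r]> <*> <[s]> by rewrite -fx mD.
have Dy : y \in <[r]> <*> <[s]> by rewrite -fy mD.
case: (boolP (x \in <[r]>)) => rx; case: (boolP (y \in <[r]>)) => ry.
- apply: cyclicS (cycle_cyclic r).
  by rewrite gen_subG !subUset !sub1set rx ry.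
- have x1 := refl_case y x y' x' ry rx Hy fy Hx fx (commute_sym cxy).
  apply: cyclicS (cycle_cyclic y).
  by rewrite gen_subG !subUset !sub1set x1 group1 cycle_id.
- have y1 := refl_case x y x' y' rx ry Hx fx Hy fy cxy.
  apply: cyclicS (cycle_cyclic x).
  by rewrite gen_subG !subUset !sub1set y1 group1 cycle_id.
- exfalso.
  have [i xi] := dih_mem s2 rs Dx rx.
  have [j yj] := dih_mem s2 rs Dy ry.
  have Ns : s \in 'N(<[r]>) by rewrite -cycle_subG (dih_nrs rs).
  have rw : x^-1 * y \in <[r]>.
    have -> : x^-1 * y = ((r ^+ i)^-1 * r ^+ j) ^ s.
      by rewrite xi yj invMg conjgE !mulgA.
    by rewrite memJ_norm // groupM ?groupV ?groupX ?cycle_id.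
  have HH : x'^-1 * y' \in H by rewrite groupM ?groupV.
  have fw : f (x'^-1 * y') = x^-1 * y by rewrite morphM ?groupV // morphV // fx fy.
  have cw : commute x' (x'^-1 * y').
    by apply: commuteM => //; apply/commuteV/commute_refl.
  have := refl_case x (x^-1 * y) x' (x'^-1 * y') rx rw Hx fx HH fw cw.
  move/eqP; rewrite -eq_invg_mul invgK => /eqP exy; by rewrite exy eqxx in nxy.
Qed.

Lemma easy x y : x \in <[r]> <*> <[s]> -> y \in <[r]> <*> <[s]> ->
  cyclic <<[set x; y]>> ->
  exists2 x', x' \in H /\ f x' = x & exists2 y', y' \in H /\ f y' = y & commute x' y'.
Proof.
move=> Dx Dy /cyclicP[z ez].
have Dz : z \in <[r]> <*> <[s]>.
  have : <[z]> \subset <[r]> <*> <[s]> by rewrite -ez gen_subG !subUset !sub1set Dx Dy.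
  by rewrite cycle_subG.
have [z' Hz fz] := lift Dz.
have : x \in <[z]> by rewrite -ez mem_gen // !inE eqxx.
case/cycleP => i ->.
have : y \in <[z]> by rewrite -ez mem_gen // !inE eqxx orbT.
case/cycleP => j ->.
exists (z' ^+ i); first by rewrite groupX // morphX // fz.
exists (z' ^+ j); first by rewrite groupX // morphX // fz.
exact: commuteX2 (commute_refl _).
Qed.

End Cover.

Lemma dih_pres n : 1 < n -> exists r s : 'D_(2 * n),
  [/\ <[r]> <*> <[s]> = [set: 'D_(2 * n)], r ^+ n = 1, s ^+ 2 = 1 & r ^ s = r^-1].
Proof.
move=> n1; have := isoGrp_hom (Grp_dihedral n1); rewrite -mul2n.
case/existsP => -[r s] /= /eqP [defD rn s2 rs]. by exists r, s.
Qed.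

Lemma big_ext n : ~~ odd n -> 1 < n ->
  exists (kT : finGroupType) (E : {group kT}) (g : {morphism E >-> 'D_(2 * n)}),
    central_stem_ext [set: 'D_(2 * n)]%G g /\ n.*2 < #|E|.
Proof.
move=> ne n1.
pose q := n.*2.
have q1 : 1 < q by rewrite /q -addnn; lia.
have [r [s [defD rn s2 rs]]] := dih_pres n1.
have hom : [set: 'D_(2 * n)] \homg [set: 'D_q.*2].
  rewrite (Grp_dihedral q1 [set: 'D_(2*n)]%G).
  apply/existsP; exists (r, s); rewrite /= !xpair_eqE defD eqxx /=.
  by rewrite /q -muln2 expgM rn expg1n s2 rs !eqxx.
case/homgP: hom => g gE.
have cD : #|[set: 'D_(2 * n)]| = n.*2 by have := card_dihedral n1; rewrite -mul2n.
have cE : #|[set: 'D_q.*2]| = q.*2 by rewrite card_dihedral.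
exists _, [set: 'D_q.*2]%G, g; split; last by rewrite cE /q -!muln2; lia.
split; first by rewrite gE.
have := isoGrp_hom (Grp_dihedral q1).
case/existsP => -[X Y] /= /eqP [defE Xq Y2 XY].
have cardE : #|<[X]> <*> <[Y]>| = q.*2 by rewrite defE cE.
have qe : ~~ odd q by rewrite /q odd_double.
have q0 : 0 < q by lia.
have ck : #|'ker g| = 2.
  have L := Lagrange (subsetT ('ker g)).
  have e2 := card_morphim g [set: 'D_q.*2]%G.
  rewrite setIid /= gE cD in e2.
  have key : forall c, (c * n.*2 = (n.*2).*2)%N -> c = 2 by move=> c; rewrite -!muln2; nia.
  by apply: key; rewrite {1}e2 L cE.
have ntk : 'ker g != 1 by rewrite trivg_card1 ck.
case/trivgPn: ntk => k Kk nk.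
have kerE : forall e, e \in 'ker g -> e = 1 \/ e = k.
  move=> e Ke.
  have : [set 1; k] == 'ker g.
    rewrite eqEcard cards2 eq_sym nk ck leqnn andbT.
    by rewrite !subUset !sub1set group1 Kk.
  by move/eqP => ek; rewrite -ek in Ke; apply/set2P.
have ckc : forall e, commute k e.
  move=> e.
  have : k ^ e \in 'ker g by rewrite memJ_norm // (subsetP (ker_norm g)) // inE.
  case/kerE => [/eqP|h]; first by rewrite conjg_eq1 (negbTE nk).
  by apply/commgP; rewrite -conjg_fix h.
have DE : forall v, v \in <[X]> <*> <[Y]> by move=> v; rewrite defE inE.
have bad : X = X^-1 -> False.
  move=> h; have : X ^+ 2 = 1 by rewrite expgS expg1 {2}h mulgV.
  move/eqP; rewrite -order_dvdn (dih_ord qe q0 Xq Y2 XY cardE) => /dvdn_leq.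
  by rewrite /q; lia.
have nY : Y \notin <[X]>.
  apply/negP => /cycleP[i ei]; apply: bad.
  have cXY : commute X Y by rewrite ei; apply: commuteX; exact: commute_refl.
  by rewrite -XY cfix.
have kX : k \in <[X]>.
  apply/negPn/negP => nkX; apply: bad.
  by rewrite -(dih_conj Y2 XY (cycle_id X) (DE k) nkX) cfix //; apply/commute_sym.
have kk : k = k^-1 by rewrite -(dih_conj Y2 XY kX (DE Y) nY) cfix.
have k2 : k ^+ 2 = 1 by rewrite expgS expg1 {2}kk mulgV.
have kXn : k = X ^+ n.
  case: (dih_inv2 qe q0 Xq Y2 XY cardE kX k2) => [k1|]; first by rewrite k1 eqxx in nk.
  by rewrite /q half_double.
have hn : (2 * n./2)%N = n.
  by rewrite -[n in RHS]odd_double_half (negbTE ne) add0n -mul2n.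
have XnE : [~ X, Y] ^+ n./2 = X ^+ n.
  have e1 : [~ X, Y] = (X ^+ 2)^-1 by rewrite commgEl XY expgS expg1 invMg.
  rewrite e1 expVgn -expgM hn; apply/eqP; rewrite eq_invg_mul -expgD addnn.
  by rewrite -/q Xq.
apply/subsetP => e /kerE [->|->]; first by rewrite group1.
rewrite inE; apply/andP; split.
  apply/centerP; split; first by rewrite inE.
  by move=> e' _; exact: ckc.
by rewrite kXn -XnE groupX // mem_commg // inE.
Qed.

Theorem theorem5p3 (n : nat) (n_even : ~~ odd n) (n_ge4 : 4 <= n)
    (hT : finGroupType) (H : {group hT})
    (f : {morphism H >-> 'D_(2 * n)}) :
  schur_cover [set: 'D_(2 * n)]%G f ->
  forall x y : 'D_(2 * n), deep_commuting_adj f x y <-> enh_power_adj x y.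
Proof.
move=> [[fH kerZ] maxH] x y.
have n1 : 1 < n by lia.
have n0 : 0 < n by lia.
have [kT [E [g [stem bigE]]]] := big_ext n_even n1.
have bigH : n.*2 < #|H| := leq_trans bigE (maxH _ E g stem).
have [r [s [defD rn s2 rs]]] := dih_pres n1.
have cardD : #|<[r]> <*> <[s]>| = n.*2.
  by rewrite defD; have := card_dihedral n1; rewrite -mul2n.
have fH' : f @* H = <[r]> <*> <[s]> by rewrite defD fH.
split.
- case=> nxy [x' [Hx fx] [y' [Hy fy] cxy]]; split => //.
  exact: (hard n_even n0 rn s2 rs cardD fH' kerZ bigH nxy Hx fx Hy fy cxy).
- case=> nxy cyc; split => //.
  by apply: (easy fH') => //; rewrite defD inE.
Qed.
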